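(* For every even integer $m\ge 4$ there exist a positive integer $n$ and a tensor in $T_{m,n}$ that is a $B$ tensor but not a $P$ tensor, and a tensor in $T_{m,n}$ that is a $B_0$ tensor but not a $P_0$ tensor.
   Context: $T_{m,n}$ denotes the set of real $m$th order $n$-dimensional tensors $\mathbb{A}=(a_{i_1i_2\ldots i_m})$ with $i_j\in[n]=\{1,\ldots,n\}$. For $x\in\mathbb{R}^n$, $(\mathbb{A}x^{m-1})_i=\sum_{i_2,\ldots,i_m=1}^n a_{ii_2\ldots i_m}x_{i_2}\cdots x_{i_m}$. $\mathbb{A}$ is a $P$ tensor if for every nonzero $x\in\mathbb{R}^n$, $\max_{i\in[n]}x_i(\mathbb{A}x^{m-1})_i>0$; it is a $P_0$ tensor if for every nonzero $x\in\mathbb{R}^n$ there is $i\in[n]$ with $x_i\ne0$ and $x_i(\mathbb{A}x^{m-1})_i\ge0$. $\mathbb{A}$ is a $B$ tensor if for all $i\in[n]$, $\sum_{i_2,\ldots,i_m=1}^n a_{ii_2\ldots i_m}>0$ and $\frac{1}{n^{m-1}}\sum_{i_2,\ldots,i_m=1}^n a_{ii_2\ldots i_m}>a_{ij_2\ldots j_m}$ for all $(j_2,\ldots,j_m)\neq(i,\ldots,i)$. $\mathbb{A}$ is a $B_0$ tensor if for all $i\in[n]$, $\sum_{i_2,\ldots,i_m=1}^n a_{ii_2\ldots i_m}\ge0$ and $\frac{1}{n^{m-1}}\sum_{i_2,\ldots,i_m=1}^n a_{ii_2\ldots i_m}\ge a_{ij_2\ldots j_m}$ for all $(j_2,\ldots,j_m)\neq(i,\ldots,i)$.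 *)

(* Defs.v *)
From HB Require Import structures.
From mathcomp Require Import all_boot all_order all_algebra.
From mathcomp Require Import reals.
Set Implicit Arguments. Unset Strict Implicit. Unset Printing Implicit Defensive.
Import Order.TTheory GRing.Theory Num.Theory.
Local Open Scope ring_scope.

(* A real m-th order n-dimensional tensor A = (a_{i i_2 ... i_m}):
   the entry a_{i i_2 ... i_m} is  A i t  with  t = (i_2,...,i_m),
   an (m-1)-tuple of indices in [n] = 'I_n (0-based). *)
Definition tensor (R : realType) (m n : nat) := 'I_n -> (m.-1).-tuple 'I_n -> R.

Definition tapply (R : realType) (m n : nat) (A : tensor R m n) (x : 'I_n -> R)
  (i : 'I_n) : R :=
  \sum_(t : (m.-1).-tuple 'I_n) A i t * \prod_(k < m.-1) x (tnth t k).

Definition nonzero_vec (R : realType) (n : nat) (x : 'I_n -> R) : Prop :=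
  exists i, x i != 0.

Definition is_P_tensor (R : realType) (m n : nat) (A : tensor R m n) : Prop :=
  forall x : 'I_n -> R, nonzero_vec x ->
    exists i : 'I_n, 0 < x i * tapply A x i.

Definition is_P0_tensor (R : realType) (m n : nat) (A : tensor R m n) : Prop :=
  forall x : 'I_n -> R, nonzero_vec x ->
    exists i : 'I_n, x i != 0 /\ 0 <= x i * tapply A x i.

Definition row_sum (R : realType) (m n : nat) (A : tensor R m n) (i : 'I_n) : R :=
  \sum_(t : (m.-1).-tuple 'I_n) A i t.

Definition diag_idx (m n : nat) (i : 'I_n) : (m.-1).-tuple 'I_n :=
  [tuple of nseq m.-1 i].

Definition is_B_tensor (R : realType) (m n : nat) (A : tensor R m n) : Prop :=
  forall i : 'I_n,
    0 < row_sum A i /\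
    forall t : (m.-1).-tuple 'I_n, t != diag_idx m i ->
      row_sum A i / (n ^ m.-1)%:R > A i t.

Definition is_B0_tensor (R : realType) (m n : nat) (A : tensor R m n) : Prop :=
  forall i : 'I_n,
    0 <= row_sum A i /\
    forall t : (m.-1).-tuple 'I_n, t != diag_idx m i ->
      row_sum A i / (n ^ m.-1)%:R >= A i t.

(* Main.v *)
Require Import Defs.
From HB Require Import structures.
From mathcomp Require Import all_boot all_order all_algebra.
From mathcomp Require Import reals.
From mathcomp Require Import ring lra.
Import Order.TTheory GRing.Theory Num.Theory.
Local Open Scope ring_scope.

Lemma sum_tuple_prod (R : comPzRingType) (n p : nat) (x : 'I_n -> R) :
  \sum_(t : p.-tuple 'I_n) \prod_(k < p) x (tnth t k) = (\sum_j x j) ^+ p.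
Proof.
have -> : (\sum_j x j) ^+ p = \prod_(k < p) \sum_j x j by rewrite prodr_const card_ord.
rewrite bigA_distr_bigA /=.
rewrite (reindex (fun t : p.-tuple 'I_n => [ffun k => tnth t k])) /=.
  by apply: eq_bigr => t _; apply: eq_bigr => k _; rewrite ffunE.
exists (fun f : {ffun 'I_p -> 'I_n} => [tuple f k | k < p]) => [t _|f _].
  by apply: eq_from_tnth => k; rewrite tnth_mktuple ffunE.
by apply/ffunP => k; rewrite ffunE tnth_mktuple.
Qed.

Lemma sum_ind (R : pzRingType) (T : finType) (d : T) (F : T -> R) :
  \sum_(t : T) (t == d)%:R * F t = F d.
Proof.
rewrite (bigD1 d) //= eqxx mul1r big1 ?addr0 // => t /negbTE ->.
by rewrite mul0r.
Qed.

Lemma sum_ind' (R : pzRingType) (T : finType) (d : T) (F : T -> R) :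
  \sum_(t : T) F t * (t == d)%:R = F d.
Proof.
rewrite (bigD1 d) //= eqxx mulr1 big1 ?addr0 // => t /negbTE ->.
by rewrite mulr0.
Qed.

Theorem proposition3p1 (R : realType) (m : nat) :
  ~~ odd m -> (4 <= m)%N ->
  exists n : nat, (0 < n)%N /\
    (exists A : tensor R m n, is_B_tensor A /\ ~ is_P_tensor A) /\
    (exists A : tensor R m n, is_B0_tensor A /\ ~ is_P0_tensor A).
Proof.
case: m => [|[|[|[|k]]]] Hk H4 //=.
have {}Hk : ~~ odd k by move: Hk; rewrite /= !negbK.
pose c (i : 'I_4) : R := if i == ord0 then 2 ^+ k.+4 else 1.
pose w (i : 'I_4) : R := if i == ord0 then 1 else 2.
pose b (i : 'I_4) : R := if i == ord0 then 0 else 1.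
pose sp (i : 'I_4) : (k.+3).-tuple 'I_4 := [tuple of i :: [tuple of nseq k.+2 ord0]].
pose A : tensor R k.+4 4 := fun i t =>
  c i + w i * (t == diag_idx k.+4 i)%:R - b i * (t == sp i)%:R.
have cpos i : 0 < c i by rewrite /c; case: ifP => _ //; exact: exprn_gt0.
have wb i : b i < w i by rewrite /w /b; case: ifP => _; rewrite ?ltr01 ?ltr0n ?ltr1n.
have b0 i : 0 <= b i by rewrite /b; case: ifP => _; rewrite ?ler01.
have Npos : (0 : R) < (4 ^ k.+3)%:R by rewrite ltr0n expn_gt0.
have rs i : row_sum A i = c i * (4 ^ k.+3)%:R + w i - b i.
  rewrite /row_sum /A !big_split /= sumrN sumr_const card_tuple card_ord.
  rewrite !sum_ind'.
  by rewrite mulr_natr.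
have HB : is_B_tensor A.
  move=> i; split.
    rewrite rs; have := cpos i; have := wb i; nra.
  move=> t /negbTE Ht; apply: (@le_lt_trans _ _ (c i)).
    rewrite /A Ht mulr0 addr0 lerBlDr lerDl.
    by apply: mulr_ge0 => //; rewrite ler0n.
  rewrite rs /=; rewrite ltr_pdivlMr //.
  by rewrite -addrA ltrDl subr_gt0 wb.
pose x (j : 'I_4) : R := if j == ord0 then 2 else -1.
have Pd i : \prod_(k0 < k.+3) x (tnth (diag_idx k.+4 i) k0) = x i ^+ k.+3.
  by rewrite /diag_idx; under eq_bigr do rewrite tnth_nseq; rewrite prodr_const card_ord.
have Ps i : \prod_(k0 < k.+3) x (tnth (sp i) k0) = x i * 2 ^+ k.+2.
  rewrite big_ord_recl /sp tnth0; under eq_bigr do rewrite tnthS tnth_nseq.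
  by rewrite prodr_const card_ord.
have ta i : tapply A x i =
    c i * (\sum_j x j) ^+ k.+3 + w i * x i ^+ k.+3 - b i * (x i * 2 ^+ k.+2).
  rewrite /tapply /A -(sum_tuple_prod _ _ k.+3 x) -Pd -Ps.
  rewrite (eq_bigr (fun t => c i * \prod_(k0 < k.+3) x (tnth t k0)
     + w i * (\prod_(k0 < k.+3) x (tnth t k0) * (t == diag_idx k.+4 i)%:R)
     - b i * (\prod_(k0 < k.+3) x (tnth t k0) * (t == sp i)%:R))); last first.
    by move=> t _; rewrite /=; ring.
  by rewrite !big_split /= sumrN -!mulr_sumr !sum_ind'.
have S : \sum_j x j = -1.
  by rewrite !big_ord_recl big_ord0 /x /=; ring.
have sg : (-1 : R) ^+ k.+3 = -1.
  by rewrite -signr_odd /= (negbTE Hk).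
have e1 : (1 : R) <= 2 ^+ k by rewrite exprn_ege1 // ler1n.
have neg i : x i * tapply A x i < 0.
  rewrite ta S sg; case: i => [[|[|[|[|?]]]] Hi] //; rewrite /x /c /w /b /=.
  - rewrite !exprS; nra.
  - rewrite sg !exprS; nra.
  - rewrite sg !exprS; nra.
  - rewrite sg !exprS; nra.
have nz : nonzero_vec x by exists ord0; rewrite /x /= pnatr_eq0.
exists 4%N; split => //; split; exists A; split => //.
- move=> HP; have [i Hi] := HP x nz.
  by have := neg i; rewrite ltNge (ltW Hi).
- move=> i; have [h1 h2] := HB i; split; first exact: ltW.
  by move=> t Ht; apply: ltW; apply: h2.
- move=> HP; have [i [_ Hi]] := HP x nz.
  by have := neg i; rewrite ltNge Hi.
Qed.
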